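(* Let $t$ be a positive integer. Then (i) $\mathfrak{d}_t(0,0)=1$; and for all integers $n,k$: (ii) $\mathfrak{d}_t(n,k)=0$ if $n<0$, or $k<0$, or $k>\min\{\lfloor (n-1+t)/2\rfloor,n\}$; (iii) otherwise, if $n>0$, then $\mathfrak{d}_t(n,k)=\mathfrak{d}_t(n-1,k-1)+\mathfrak{d}_t(n-1,k)$.
   Context: Let $x_j=x^j/j!$ for $j\ge0$ in $\mathbb{R}[x]$, let $S=\operatorname{span}\{x_j\}_{j\ge1}$, and let $D:S\to\mathbb{R}[x]$ be the linear isomorphism $D(y)=y'+y''$; put $D^{-N}=(D^{-1})^N$. For each integer $N\ge1$, $D^{-N}(x_{t-1})\in\operatorname{span}\{x_j\}_{j=1}^{t-1+N}$, and real numbers $\mathfrak{d}_t(i+N-1,i)$ ($0\le i\le t+N-2$) are defined by $D^{-N}(x_{t-1})=\sum_{i=0}^{t+N-2}(-1)^i\,\mathfrak{d}_t(i+N-1,i)\,x_{t-1+N-i}$. For any integer pair $(n,k)$ not of the form $(i+N-1,i)$ with $N\ge1$ and $0\le i\le t+N-2$, set $\mathfrak{d}_t(n,k)=0$. *)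

(* Defs.v *)
From HB Require Import structures.
From mathcomp Require Import all_boot all_order all_algebra.
From Stdlib Require Import ClassicalEpsilon.
Set Implicit Arguments. Unset Strict Implicit. Unset Printing Implicit Defensive.
Import Order.TTheory GRing.Theory Num.Theory.
Local Open Scope ring_scope.

Definition xj (R : realFieldType) (j : nat) : {poly R} := (j`!%:R)^-1 *: 'X^j.

(* S = span{x_j}_{j>=1} = polynomials with zero constant term *)
Definition inS (R : realFieldType) (p : {poly R}) : Prop := p`_0 = 0.

Definition Dop (R : realFieldType) (p : {poly R}) : {poly R} := p^`() + p^`(2).

(* D^{-1} : R[x] -> S, the inverse of the isomorphism D : S -> R[x]:
   the unique q in S with D q = p. *)
Definition Dinv (R : realFieldType) (p : {poly R}) : {poly R} :=
  epsilon (inhabits 0) (fun q => inS q /\ Dop q = p).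

Definition DinvN (R : realFieldType) (N : nat) (p : {poly R}) : {poly R} :=
  iter N (@Dinv R) p.

(* coefficient of x_m in p, i.e. m! * (coefficient of X^m) *)
Definition xcoef (R : realFieldType) (p : {poly R}) (m : nat) : R := m`!%:R * p`_m.

(* d_t(i+N-1, i) for N >= 1, 0 <= i <= t+N-2:
   D^{-N}(x_{t-1}) = sum_i (-1)^i d_t(i+N-1,i) x_{t-1+N-i} *)
Definition dnat (R : realFieldType) (t N i : nat) : R :=
  (-1) ^+ i * xcoef (DinvN N (xj R (t - 1))) (t - 1 + N - i).

(* d_t(n,k) for integers n,k: defined when (n,k) = (i+N-1,i) with N >= 1 and
   0 <= i <= t+N-2, i.e. 0 <= k <= n and k <= t + (n-k+1) - 2; else 0. *)
Definition dd (R : realFieldType) (t : nat) (n k : int) : R :=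
  if (0 <= k) && (k <= n) && (k <= t%:Z + (n - k + 1) - 2)
  then dnat R t (`|n|%N - `|k|%N).+1 `|k|%N
  else 0.

(* Main.v *)
Require Import Defs.
From HB Require Import structures.
From mathcomp Require Import all_boot all_order all_algebra.
From mathcomp Require Import zify ring lra.
From Stdlib Require Import ClassicalEpsilon.
Import Order.TTheory GRing.Theory Num.Theory.
Local Open Scope ring_scope.

Section S.
Variable R : realFieldType.

Lemma Dop_coef (p : {poly R}) m :
  (Dop p)`_m = p`_m.+1 *+ m.+1 + p`_m.+2 *+ (m.+2 * m.+1).
Proof.
rewrite /Dop coefD coef_deriv coef_derivn.
by rewrite !ffactnS ffactn0 muln1 add2n.
Qed.

Lemma DopD (p q : {poly R}) : Dop (p + q) = Dop p + Dop q.
Proof. by rewrite /Dop derivD derivnD addrACA. Qed.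

Lemma Dop_ex n : forall p : {poly R}, (size p <= n)%N ->
  exists q : {poly R}, q`_0 = 0 /\ Dop q = p.
Proof.
elim: n => [|n IH] p Hp.
  exists 0; split; first by rewrite coef0.
  move: Hp; rewrite size_poly_leq0 => /eqP ->.
  by rewrite /Dop deriv0 linear0 addr0.
set a := p`_n / n.+1%:R.
set r := p - Dop (a *: 'X^(n.+1)).
have Hr : (size r <= n)%N.
  apply/leq_sizeP => j Hj.
  rewrite /r coefB Dop_coef !coefZ !coefXn.
  have -> : (j.+2 == n.+1) = false by apply/negbTE; rewrite eqSS; apply/eqP; lia.
  rewrite mulr0 mul0rn addr0.
  case: (ltngtP j n) => Hjn; first lia.
  - rewrite eqSS (gtn_eqF Hjn) mulr0 mul0rn subr0.
    by move/leq_sizeP: Hp; apply.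
  - by subst j; rewrite eqxx mulr1 /a -[_ *+ n.+1]mulr_natr divfK ?subrr // pnatr_eq0.
have [qr [Hq0 Hq]] := IH r Hr.
exists (qr + a *: 'X^(n.+1)); split.
  by rewrite coefD coefZ coefXn /= mulr0 addr0.
by rewrite DopD Hq /r subrK.
Qed.

Lemma Dinv_spec (p : {poly R}) : (Dinv p)`_0 = 0 /\ Dop (Dinv p) = p.
Proof.
rewrite /Dinv; apply: (epsilon_spec (inhabits 0) (fun q => inS q /\ Dop q = p)).
exact: (@Dop_ex (size p) p (leqnn _)).
Qed.

Lemma xcoef_rec (p : {poly R}) m :
  xcoef p m = xcoef (Dinv p) m.+1 + xcoef (Dinv p) m.+2.
Proof.
have [_ E] := Dinv_spec p.
move: (Dinv p) E => q <-.
rewrite /xcoef Dop_coef (factS m.+1) (factS m) -(mulr_natr q`_m.+1) -(mulr_natr q`_m.+2).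
rewrite !natrM; ring.
Qed.

Lemma size_Dinv (p : {poly R}) : (size (Dinv p) <= (size p).+1)%N.
Proof.
set q := Dinv p.
have rec : forall m, (size p <= m)%N -> xcoef q m.+1 = - xcoef q m.+2.
  move=> m Hm; have := xcoef_rec p m.
  rewrite {1}/xcoef nth_default // mulr0 => /eqP; rewrite eq_sym addr_eq0 => /eqP.
  by [].
have K : forall k j, (size p < j)%N -> xcoef q (j + k) = (-1) ^+ k * xcoef q j.
  elim=> [|k IHk] j Hj; first by rewrite addn0 expr0 mul1r.
  have H := rec (j + k).-1.
  have e1 : (j + k).-1.+1 = j + k by lia.
  have e2 : (j + k).-1.+2 = j + k.+1 by lia.
  rewrite e2 e1 in H.
  rewrite -[xcoef q (j + k.+1)]opprK -H; last lia.
  by rewrite IHk // exprS; ring.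
apply/leq_sizeP => j Hj.
have := K (size q) j Hj.
rewrite {1}/xcoef (nth_default _ (leq_addl _ _)) mulr0 => /esym /eqP.
rewrite mulf_eq0 signr_eq0 /= /xcoef mulf_eq0 pnatr_eq0 (gtn_eqF (fact_gt0 j)) /=.
by move/eqP.
Qed.


Variable t : nat.
Hypothesis ht : (0 < t)%N.

Definition cc N m := xcoef (DinvN N (xj R (t - 1))) m.

Lemma cc_rec N m : cc N m = cc N.+1 m.+1 + cc N.+1 m.+2.
Proof. by rewrite /cc /DinvN iterS xcoef_rec. Qed.

Lemma cc_0 N : (0 < N)%N -> cc N 0 = 0.
Proof.
case: N => // N _; rewrite /cc /DinvN iterS /xcoef.
by have [-> _] := Dinv_spec (iter N (@Dinv R) (xj R (t - 1))); rewrite mulr0.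
Qed.

Lemma size_DinvN N : (size (DinvN N (xj R (t - 1))) <= t + N)%N.
Proof.
elim: N => [|N IH].
  rewrite addn0 /DinvN /= /xj; apply: (leq_trans (size_scale_leq _ _)).
  by rewrite size_polyXn; lia.
rewrite /DinvN iterS; apply: (leq_trans (size_Dinv _)); rewrite addnS ltnS; exact: IH.
Qed.

Lemma cc_big N m : (t + N <= m)%N -> cc N m = 0.
Proof.
move=> H; rewrite /cc /xcoef nth_default ?mulr0 //.
exact: leq_trans (size_DinvN N) H.
Qed.

Lemma cc0 m : cc 0 m = (m == (t - 1)%N)%:R.
Proof.
rewrite /cc /DinvN /= /xcoef /xj coefZ coefXn.
case: eqP => [->|_]; last by rewrite !mulr0.
by rewrite mulr1 mulfV // pnatr_eq0 (gtn_eqF (fact_gt0 _)).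
Qed.


Lemma ddE (a b : nat) : dd R t a b =
  if (b <= a)%N && (b + b <= a + t - 1)%N
  then (-1) ^+ b * cc (a - b).+1 (t + a - (b + b)) else 0.
Proof.
rewrite /dd /dnat /cc.
have -> : ((0 <= b%:Z) && (b%:Z <= a%:Z) && (b%:Z <= t%:Z + (a%:Z - b%:Z + 1) - 2))
   = (b <= a)%N && (b + b <= a + t - 1)%N.
  apply/idP/idP.
    move=> /andP[/andP[H1 H2] H3]; apply/andP; split; lia.
  move=> /andP[H1 H2]; apply/andP; split; first (apply/andP; split); lia.
case: ifP => // /andP[H1 H2] /=.
by congr (_ * xcoef _ _); lia.
Qed.

Lemma ddneg (n k : int) : k < 0 -> dd R t n k = 0.
Proof. by move=> Hk; rewrite /dd; case: ifP => // /andP[/andP[H _] _]; lia. Qed.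

End S.

Theorem lemma3p3 (R : realFieldType) (t : nat) (ht : (0 < t)%N) :
  dd R t 0 0 = 1 /\
  (forall n k : int,
      (n < 0 \/ k < 0 \/ Num.min ((n - 1 + t%:Z) %/ 2)%Z n < k) ->
      dd R t n k = 0) /\
  (forall n k : int,
      ~ (n < 0 \/ k < 0 \/ Num.min ((n - 1 + t%:Z) %/ 2)%Z n < k) ->
      0 < n ->
      dd R t n k = dd R t (n - 1) (k - 1) + dd R t (n - 1) k).
Proof.
split.
  rewrite (ddE R t ht 0 0) /= expr0 mul1r addn0 subn0.
  have := cc_rec R t 0 (t - 1).
  have -> : (t - 1).+1 = t by lia.
  rewrite cc0 eqxx (cc_big R t ht 1 t.+1); last lia.
  by rewrite addr0 addn0 subn0 => <-.
split.
  move=> n k H; rewrite /dd; case: ifP => // /andP[/andP[H1 H2] H3]; exfalso.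
  have E := divz_eq (n - 1 + t%:Z) 2.
  have M1 := modz_ge0 (n - 1 + t%:Z) (d:=2) isT.
  have M2 : ((n - 1 + t%:Z) %% 2)%Z < 2 := ltz_mod (n - 1 + t%:Z) (d:=2) isT.
  move: H; case: (lerP ((n - 1 + t%:Z) %/ 2)%Z n) => _; lia.
move=> [a|a] k H Hn; last by [].
case: k H => [b|b] H; last by exfalso; apply: H; right; left.
case: a H Hn => [|a] H Hn //.
have [Hba Hq] : (b <= a.+1)%N /\ (b + b <= a + t)%N.
  have E := divz_eq (a.+1%:Z - 1 + t%:Z) 2.
  have M1 := modz_ge0 (a.+1%:Z - 1 + t%:Z) (d:=2) isT.
  have M2 : ((a.+1%:Z - 1 + t%:Z) %% 2)%Z < 2 := ltz_mod (a.+1%:Z - 1 + t%:Z) (d:=2) isT.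
  move: H; case: (lerP ((a.+1%:Z - 1 + t%:Z) %/ 2)%Z a.+1%:Z) => Hm H; split; lia.
have -> : (Posz a.+1 - 1 = Posz a)%R by lia.
case: b H Hba Hq => [|b] H Hba Hq.
  rewrite (ddneg R t ht _ (0%:Z - 1)) // add0r.
  rewrite !(ddE R t ht) !add0n !leq0n /=.
  rewrite !subn0 !expr0 !mul1r addnS (cc_rec R t a.+1 (t + a)).
  by rewrite (cc_big R t ht a.+2 (t + a).+2) ?addr0 //; lia.
have -> : (Posz b.+1 - 1 = Posz b)%R by lia.
rewrite !(ddE R t ht) (ifT _ _ (_ : _ && _)); last (apply/andP; split; lia).
rewrite (ifT _ _ (_ : (b <= a)%N && _)); last (apply/andP; split; lia).
have e1 : (t + a.+1 - (b.+1 + b.+1))%N = (t + a - (b + b) - 2).+1 by lia.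
have e2 : (t + a - (b + b))%N = (t + a - (b + b) - 2).+2 by lia.
rewrite subSS e2 e1.
have R0 := cc_rec R t (a - b) (t + a - (b + b) - 2).
case: ifP => /andP HC.
  have e3 : (a - b.+1).+1 = (a - b)%N by lia.
  have e4 : (t + a - (b.+1 + b.+1))%N = (t + a - (b + b) - 2)%N by lia.
  rewrite e3 e4 R0 exprS; ring.
have Z : cc R t (a - b) (t + a - (b + b) - 2) = 0.
  case: (posnP (a - b)) => Hab.
    rewrite Hab cc0; case: eqP => //; lia.
  have -> : (t + a - (b + b) - 2 = 0)%N; last by rewrite cc_0.
  case: (leqP b.+1 a) => Hb; last lia.
  suff : ~~ (b.+1 + b.+1 <= a + t - 1)%N by lia.
  apply/negP => Hc; apply: HC; split => //.
rewrite Z in R0.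
rewrite exprS; apply/eqP; rewrite -subr_eq0; apply/eqP.
have -> : cc R t (a - b).+1 (t + a - (b + b) - 2).+1 = - cc R t (a - b).+1 (t + a - (b + b) - 2).+2.
  by apply/eqP; rewrite -subr_eq0 opprK; apply/eqP; rewrite -R0.
ring.
Qed.
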